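(* For positive integers $x$ and $y$, $$\binom{y}{2} + \binom{\lceil 2x/y \rceil}{2} < x + y - 1$$ holds if and only if either $y = 2$ and $x \in \{1,2\}$, or $y = 3$ and $x = 3$.
   Context: $\binom{m}{2} = m(m-1)/2$ for a nonnegative integer $m$, and $\lceil \cdot \rceil$ is the ceiling function. *)

(* Defs.v *)
From mathcomp Require Import all_boot.
Set Implicit Arguments. Unset Strict Implicit. Unset Printing Implicit Defensive.

Definition ceil_div (a b : nat) : nat := (a + b.-1) %/ b.

(* Main.v *)
Require Import Defs.
From mathcomp Require Import all_boot.
From mathcomp Require Import zify.
From Stdlib Require Import ZArith Lia.

Lemma bin2_2 n : 2 * 'C(n, 2) = n * n.-1.
Proof. elim: n => [|n IH] //; rewrite binS bin1 mulnDr IH; case: n {IH} => //= n; lia. Qed.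

Lemma bnd (y c : nat) : y*y + c*c < c*y + 3*y + c -> y <= 4 /\ c <= 4.
Proof. move=> H.
have h1 := Z.square_nonneg (2*Z.of_nat c - Z.of_nat y - 1)%Z.
have h2 := Z.square_nonneg (2*Z.of_nat y - Z.of_nat c - 3)%Z.
nia. Qed.

Lemma key x y c r a b : 0 < x -> 0 < y -> 2 * x + y.-1 = c * y + r -> r < y ->
  2 * a = y * y.-1 -> 2 * b = c * c.-1 ->
  a + b < x + y - 1 <-> (y = 2 /\ (x = 1 \/ x = 2)) \/ (y = 3 /\ x = 3).
Proof.
move=> hx hy E R B1 B2.
split.
- move=> H.
  have H2 : y*y + c*c < c*y + 3*y + c by nia.
  have [Hy Hc] := @bnd y c H2.
  move: E R B1 B2 H {H2}.
  case: y hy Hy => [|[|[|[|[|y]]]]] //= _ _;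
  case: c Hc => [|[|[|[|[|c]]]]] //= _; lia.
- case=> [[Ey [Ex|Ex]]|[Ey Ex]]; subst x y.
  + have : c = 1 by nia. move=> ?; subst c. lia.
  + have : c = 2 by nia. move=> ?; subst c. lia.
  + have : c = 2 by nia. move=> ?; subst c. lia.
Qed.

Theorem lemma2 (x y : nat) (hx : 0 < x) (hy : 0 < y) :
  'C(y, 2) + 'C(ceil_div (2 * x) y, 2) < x + y - 1
  <-> (y = 2 /\ (x = 1 \/ x = 2)) \/ (y = 3 /\ x = 3).
Proof.
rewrite /ceil_div.
apply: (@key x y ((2 * x + y.-1) %/ y) ((2 * x + y.-1) %% y) _ _ hx hy).
- by rewrite -divn_eq.
- exact: ltn_pmod.
- exact: bin2_2.
- exact: bin2_2.
Qed.
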